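(* Let $S$ be the class of Schreier split epimorphisms in the category $\mathsf{SRng}$ of semirings. If $B$ is a ring (i.e. a semiring whose additive monoid is a group) with $B\neq 0$, then the change-of-base functor along the unique morphism $0\to B$, namely the kernel functor $\mathrm{Ker}_B\colon SPt_B(\mathsf{SRng})\to SPt_0(\mathsf{SRng})\cong\mathsf{SRng}$, does not have a right adjoint. In particular $\mathsf{SRng}$ is not $S$-locally algebraically cartesian closed.
   Context: A semiring is a set with a commutative monoid structure $(+,0)$ and an associative (not necessarily unital) multiplication distributing over $+$ on both sides, with $0x=x0=0$. A point is a split epimorphism $f\colon A\to B$ with chosen section $s$; $Pt_B$ denotes points over $B$; for $h\colon E\to B$, $h^*$ pulls points back along $h$. A split epimorphism $(A,B,f,s)$ of semirings is Schreier if each $a\in A$ can be written uniquely as $a=\alpha+sf(a)$ with $f(\alpha)=0$. $SPt_B(\mathsf{SRng})$ is the full subcategory of $Pt_B(\mathsf{SRng})$ of Schreier points. A category is $S$-LACC if for every morphism $h$ the functor $h^*$ between the categories of $S$-points has a right adjoint. *)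

(* Defs.v *)
From Stdlib Require Import ProofIrrelevance.

Set Implicit Arguments.

Record SRng := {
  car :> Type;
  sadd : car -> car -> car;
  szero : car;
  smul : car -> car -> car;
  saddA : forall x y z, sadd x (sadd y z) = sadd (sadd x y) z;
  saddC : forall x y, sadd x y = sadd y x;
  sadd0 : forall x, sadd x szero = x;
  smulA : forall x y z, smul x (smul y z) = smul (smul x y) z;
  smulDl : forall x y z, smul (sadd x y) z = sadd (smul x z) (smul y z);
  smulDr : forall x y z, smul x (sadd y z) = sadd (smul x y) (smul x z);
  smul0l : forall x, smul szero x = szero;
  smul0r : forall x, smul x szero = szero
}.

Arguments sadd {s}.
Arguments szero {s}.
Arguments smul {s}.

Record hom (A B : SRng) := {
  fn :> A -> B;
  fn_add : forall x y, fn (sadd x y) = sadd (fn x) (fn y);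
  fn_zero : fn szero = szero;
  fn_mul : forall x y, fn (smul x y) = smul (fn x) (fn y)
}.

Definition is_ring (B : SRng) : Prop :=
  forall b : B, exists b' : B, sadd b b' = szero.

Definition nontrivial (B : SRng) : Prop := exists b : B, b <> szero.

Definition zeroSRng : SRng :=
  {| car := unit; sadd := fun _ _ => tt; szero := tt; smul := fun _ _ => tt;
     saddA := fun _ _ _ => eq_refl; saddC := fun _ _ => eq_refl;
     sadd0 := fun x => match x with tt => eq_refl end;
     smulA := fun _ _ _ => eq_refl; smulDl := fun _ _ _ => eq_refl;
     smulDr := fun _ _ _ => eq_refl; smul0l := fun _ => eq_refl;
     smul0r := fun _ => eq_refl |}.

Lemma zero_hom_add (B : SRng) (x y : zeroSRng) :
  (fun _ : zeroSRng => @szero B) (sadd x y) =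
  sadd ((fun _ : zeroSRng => @szero B) x) ((fun _ : zeroSRng => @szero B) y).
Proof. simpl. symmetry. apply sadd0. Qed.

Lemma zero_hom_mul (B : SRng) (x y : zeroSRng) :
  (fun _ : zeroSRng => @szero B) (smul x y) =
  smul ((fun _ : zeroSRng => @szero B) x) ((fun _ : zeroSRng => @szero B) y).
Proof. simpl. symmetry. apply smul0l. Qed.

Definition initial_hom (B : SRng) : hom zeroSRng B :=
  {| fn := fun _ => szero; fn_add := @zero_hom_add B;
     fn_zero := eq_refl; fn_mul := @zero_hom_mul B |}.

Record point (B : SRng) := {
  pA : SRng;
  pf : hom pA B;
  ps : hom B pA;
  psec : forall b, pf (ps b) = b
}.

Definition Schreier (B : SRng) (P : point B) : Prop :=
  forall a : pA P,
    exists alpha : pA P,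
      (pf P alpha = szero /\ a = sadd alpha (ps P (pf P a))) /\
      forall alpha' : pA P,
        pf P alpha' = szero /\ a = sadd alpha' (ps P (pf P a)) -> alpha' = alpha.

Record phom (B : SRng) (P Q : point B) := {
  pg :> hom (pA P) (pA Q);
  pg_f : forall a, pf Q (pg a) = pf P a;
  pg_s : forall b, pg (ps P b) = ps Q b
}.

Section Pullback.
Variables (E B : SRng) (h : hom E B) (P : point B).

Definition pbcar := { x : pA P * E | pf P (fst x) = h (snd x) }.

Lemma pb_eq (x y : pbcar) : proj1_sig x = proj1_sig y -> x = y.
Proof.
  destruct x as [x px], y as [y py]; simpl; intros ->.
  f_equal; apply proof_irrelevance.
Qed.

Definition pbadd (x y : pbcar) : pbcar.
Proof.
  refine (exist _ (sadd (fst (proj1_sig x)) (fst (proj1_sig y)),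
                   sadd (snd (proj1_sig x)) (snd (proj1_sig y))) _).
  simpl. rewrite fn_add, fn_add, (proj2_sig x), (proj2_sig y). reflexivity.
Defined.

Definition pbmul (x y : pbcar) : pbcar.
Proof.
  refine (exist _ (smul (fst (proj1_sig x)) (fst (proj1_sig y)),
                   smul (snd (proj1_sig x)) (snd (proj1_sig y))) _).
  simpl. rewrite fn_mul, fn_mul, (proj2_sig x), (proj2_sig y). reflexivity.
Defined.

Definition pbzero : pbcar.
Proof.
  refine (exist _ (szero, szero) _). simpl. rewrite !fn_zero. reflexivity.
Defined.

Ltac pbsolve lem :=
  intros; apply pb_eq; simpl; f_equal; apply lem.

Definition pbSRng : SRng.
Proof.
  refine {| car := pbcar; sadd := pbadd; szero := pbzero; smul := pbmul |}.
  all: try (pbsolve saddA); try (pbsolve saddC); try (pbsolve sadd0);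
       try (pbsolve smulA); try (pbsolve smulDl); try (pbsolve smulDr);
       try (pbsolve smul0l); try (pbsolve smul0r).
  intros [[a e] p]; apply pb_eq; simpl; rewrite !sadd0; reflexivity.
Defined.

Definition pb_proj : hom pbSRng E.
Proof.
  refine {| fn := fun x : pbSRng => snd (proj1_sig x) |}; reflexivity.
Defined.

Definition pb_sec_fn (e : E) : pbSRng.
Proof.
  refine (exist _ (ps P (h e), e) _). simpl. apply psec.
Defined.

Definition pb_sec : hom E pbSRng.
Proof.
  refine {| fn := pb_sec_fn |}.
  - intros; apply pb_eq; simpl; rewrite fn_add, fn_add; reflexivity.
  - apply pb_eq; simpl; rewrite !fn_zero; reflexivity.
  - intros; apply pb_eq; simpl; rewrite fn_mul, fn_mul; reflexivity.
Defined.

Definition pullback : point E.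
Proof.
  refine {| pA := pbSRng; pf := pb_proj; ps := pb_sec |}.
  intros; reflexivity.
Defined.

End Pullback.

Section PullbackMap.
Variables (E B : SRng) (h : hom E B) (P Q : point B) (g : phom P Q).

Definition pbmap_fn (x : pbSRng h P) : pbSRng h Q.
Proof.
  refine (exist _ (g (fst (proj1_sig x)), snd (proj1_sig x)) _).
  simpl. rewrite pg_f. apply (proj2_sig x).
Defined.

Definition pbmap_hom : hom (pbSRng h P) (pbSRng h Q).
Proof.
  refine {| fn := pbmap_fn |}.
  - intros; apply pb_eq; simpl; rewrite fn_add; reflexivity.
  - apply pb_eq; simpl; rewrite fn_zero; reflexivity.
  - intros; apply pb_eq; simpl; rewrite fn_mul; reflexivity.
Defined.

Definition pullback_map : phom (pullback h P) (pullback h Q).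
Proof.
  refine (@Build_phom E (pullback h P) (pullback h Q) pbmap_hom _ _).
  - intros; reflexivity.
  - intros; apply pb_eq; simpl; rewrite pg_s; reflexivity.
Defined.

End PullbackMap.

(* The functor h^* : SPt_B -> SPt_E has a right adjoint, expressed by the
   existence of a universal arrow (terminal object of the comma category
   h^* / Q) for every Schreier point Q over E (Mac Lane, Thm IV.1.2).
   Morphisms of points are compared extensionally. *)
Definition SHasRightAdjoint (E B : SRng) (h : hom E B) : Prop :=
  forall Q : point E, Schreier Q ->
    exists (R : point B) (eps : phom (pullback h R) Q),
      Schreier R /\
      forall (P : point B), Schreier P ->
        forall k : phom (pullback h P) Q,
          exists g : phom P R,
            (forall x, eps (pullback_map h g x) = k x) /\
            forall g' : phom P R,
              (forall x, eps (pullback_map h g' x) = k x) ->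
              forall a, g' a = g a.

Definition S_LACC : Prop :=
  forall (E B : SRng) (h : hom E B), SHasRightAdjoint h.

(* Main.v *)
Require Import Defs.
From Stdlib Require Import ProofIrrelevance Lia.

Fixpoint nsm {B : SRng} (n : nat) (b : B) : B :=
  match n with O => szero | S k => sadd b (nsm k b) end.

Section Aux.
Variable B : SRng.

Lemma sadd0l (x : B) : sadd szero x = x.
Proof. rewrite saddC; apply sadd0. Qed.

Lemma sadd_swap (a b c d : B) : sadd (sadd a b) (sadd c d) = sadd (sadd a c) (sadd b d).
Proof.
  rewrite <- !saddA. f_equal. rewrite (saddA _ b c d), (saddC _ b c), <- saddA. reflexivity.
Qed.

Lemma nsm_addn n m (b : B) : nsm (n + m) b = sadd (nsm n b) (nsm m b).
Proof. induction n; simpl. - now rewrite sadd0l. - rewrite IHn, saddA. reflexivity. Qed.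

Lemma nsm_addb n (b c : B) : nsm n (sadd b c) = sadd (nsm n b) (nsm n c).
Proof. induction n; simpl. - now rewrite sadd0. - rewrite IHn. apply sadd_swap. Qed.

Lemma nsm_zero n : nsm n (@szero B) = szero.
Proof. induction n; simpl. - reflexivity. - rewrite IHn. apply sadd0. Qed.

Lemma smul_nsm_r n (b c : B) : smul b (nsm n c) = nsm n (smul b c).
Proof. induction n; simpl. - apply smul0r. - rewrite smulDr, IHn. reflexivity. Qed.

Definition A1 : SRng.
Proof.
  refine {| car := (nat * B)%type;
    sadd := fun x y => (fst x + fst y, sadd (snd x) (snd y))%nat;
    szero := (0%nat, szero);
    smul := fun x y => (0%nat, smul (snd x) (snd y)) |}.
  - intros [] [] []; simpl; f_equal; [lia| apply saddA].
  - intros [] []; simpl; f_equal; [lia| apply saddC].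
  - intros []; simpl; f_equal; [lia| apply sadd0].
  - intros [] [] []; simpl; f_equal; apply smulA.
  - intros [] [] []; simpl; f_equal; apply smulDl.
  - intros [] [] []; simpl; f_equal; apply smulDr.
  - intros []; simpl; f_equal; apply smul0l.
  - intros []; simpl; f_equal; apply smul0r.
Defined.

Definition A2 : SRng.
Proof.
  refine {| car := ((B * nat) * B)%type;
    sadd := fun x y => ((sadd (fst (fst x)) (fst (fst y)),
                         snd (fst x) + snd (fst y))%nat, sadd (snd x) (snd y));
    szero := ((szero, 0%nat), szero);
    smul := fun x y => ((sadd (smul (snd x) (fst (fst y))) (nsm (snd (fst y)) (snd x)), 0%nat),
                        smul (snd x) (snd y)) |}.
  - intros [[] ] [[] ] [[] ]; simpl; f_equal; [f_equal; [apply saddA|lia]| apply saddA].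
  - intros [[] ] [[] ]; simpl; f_equal; [f_equal; [apply saddC|lia]| apply saddC].
  - intros [[] ]; simpl; f_equal; [f_equal; [apply sadd0|lia]| apply sadd0].
  - intros [[u n] b] [[u' n'] b'] [[u'' n''] b'']; simpl; f_equal; [f_equal|apply smulA].
    simpl. rewrite smulDr, smul_nsm_r, sadd0, smulA. reflexivity.
  - intros [[u n] b] [[u' n'] b'] [[u'' n''] b'']; simpl; f_equal; [f_equal|apply smulDl].
    rewrite smulDl, nsm_addb. apply sadd_swap.
  - intros [[u n] b] [[u' n'] b'] [[u'' n''] b'']; simpl; f_equal; [f_equal|apply smulDr].
    rewrite smulDr, nsm_addn. apply sadd_swap.
  - intros [[u n] b]; simpl; f_equal; [f_equal|apply smul0l].
    rewrite smul0l, nsm_zero. apply sadd0.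
  - intros [[u n] b]; simpl; f_equal; [f_equal|apply smul0r].
    rewrite smul0r. apply sadd0.
Defined.

Definition AX : SRng.
Proof.
  refine {| car := ((nat * B) * B)%type;
    sadd := fun x y => ((fst (fst x) + fst (fst y),
                         sadd (snd (fst x)) (snd (fst y)))%nat, sadd (snd x) (snd y));
    szero := ((0%nat, szero), szero);
    smul := fun x y => ((0%nat, szero), nsm (fst (fst x)) (snd (fst y))) |}.
  - intros [[] ] [[] ] [[] ]; simpl; f_equal; [f_equal; [lia|apply saddA]| apply saddA].
  - intros [[] ] [[] ]; simpl; f_equal; [f_equal; [lia|apply saddC]| apply saddC].
  - intros [[] ]; simpl; f_equal; [f_equal; [lia|apply sadd0]| apply sadd0].
  - intros [[u n] b] [[u' n'] b'] [[u'' n''] b'']; simpl. rewrite nsm_zero. reflexivity.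
  - intros [[u n] b] [[u' n'] b'] [[u'' n''] b'']; simpl. rewrite sadd0, nsm_addn. reflexivity.
  - intros [[u n] b] [[u' n'] b'] [[u'' n''] b'']; simpl. rewrite sadd0, nsm_addb. reflexivity.
  - intros [[u n] b]; simpl. reflexivity.
  - intros [[u n] b]; simpl. rewrite nsm_zero. reflexivity.
Defined.

End Aux.

Section Main.
Variable B : SRng.

Definition f1 : hom (A1 B) B.
Proof. refine {| fn := fun x : A1 B => snd x |}; reflexivity. Defined.

Definition s1 : hom B (A1 B).
Proof.
  refine {| fn := fun b : B => ((0%nat, b) : A1 B) |}; reflexivity.
Defined.

Definition P1 : point B.
Proof. refine {| pA := A1 B; pf := f1; ps := s1 |}; reflexivity. Defined.

Definition f2 : hom (A2 B) B.
Proof. refine {| fn := fun x : A2 B => snd x |}; reflexivity. Defined.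

Definition s2 : hom B (A2 B).
Proof.
  refine {| fn := fun b : B => (((szero, 0%nat), b) : A2 B) |}.
  - intros; simpl. rewrite sadd0. reflexivity.
  - reflexivity.
  - intros; simpl. rewrite smul0r, sadd0. reflexivity.
Defined.

Definition P2 : point B.
Proof. refine {| pA := A2 B; pf := f2; ps := s2 |}; reflexivity. Defined.

Lemma P1S : Schreier P1.
Proof.
  intros [n b]. exists ((n, szero) : A1 B). simpl. split.
  - split; [reflexivity|]. f_equal; [lia| now rewrite sadd0l].
  - intros [n' b'] [H1 H2]. simpl in *. subst b'. injection H2; intros. f_equal. lia.
Qed.

Lemma P2S : Schreier P2.
Proof.
  intros [[u n] b]. exists (((u, n), szero) : A2 B). simpl. split.
  - split; [reflexivity|]. f_equal; [f_equal; [now rewrite sadd0|lia]| now rewrite sadd0l].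
  - intros [[u' n'] b'] [H1 H2]. simpl in *. subst b'. injection H2; intros.
    rewrite !sadd0 in *. subst. f_equal. f_equal. lia.
Qed.

Definition fQ : hom (AX B) zeroSRng.
Proof. refine {| fn := (fun _ => tt) : AX B -> zeroSRng |}; reflexivity. Defined.

Definition sQ : hom zeroSRng (AX B).
Proof.
  refine {| fn := fun _ => (szero : AX B) |}.
  - intros; simpl. rewrite !sadd0. reflexivity.
  - reflexivity.
  - intros; simpl. reflexivity.
Defined.

Definition Qx : point zeroSRng.
Proof. refine {| pA := AX B; pf := fQ; ps := sQ |}. intros []; reflexivity. Defined.

Lemma QxS : Schreier Qx.
Proof.
  intros a. exists a. split.
  - split; [reflexivity|]. symmetry. apply (sadd0 (AX B)).
  - intros a' [_ H]. rewrite H. symmetry. apply (sadd0 (AX B)).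
Qed.

Let h := initial_hom B.

Definition k1fn (x : pbSRng h P1) : AX B :=
  ((fst (fst (proj1_sig x)), szero), szero).

Definition k1h : hom (pbSRng h P1) (AX B).
Proof.
  refine {| fn := k1fn |}.
  - intros [[[n b] []] p] [[[n' b'] []] p']; unfold k1fn; simpl. rewrite !sadd0. reflexivity.
  - reflexivity.
  - intros [[[n b] []] p] [[[n' b'] []] p']; unfold k1fn; simpl. rewrite nsm_zero. reflexivity.
Defined.

Definition k1 : phom (pullback h P1) Qx.
Proof.
  refine (@Build_phom zeroSRng (pullback h P1) Qx k1h _ _).
  - intros; match goal with |- ?x = ?y => destruct x; destruct y; reflexivity end.
  - intros; reflexivity.
Defined.

Definition k2fn (x : pbSRng h P2) : AX B :=
  ((0%nat, fst (fst (fst (proj1_sig x)))), szero).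

Definition k2h : hom (pbSRng h P2) (AX B).
Proof.
  refine {| fn := k2fn |}.
  - intros [[[[u n] b] []] p] [[[[u' n'] b'] []] p']; unfold k2fn; simpl. rewrite !sadd0. reflexivity.
  - reflexivity.
  - intros [[[[u n] b] []] p] [[[[u' n'] b'] []] p']; unfold k2fn; simpl in *.
    subst b. rewrite smul0l, nsm_zero, sadd0. reflexivity.
Defined.

Definition k2 : phom (pullback h P2) Qx.
Proof.
  refine (@Build_phom zeroSRng (pullback h P2) Qx k2h _ _).
  - intros; match goal with |- ?x = ?y => destruct x; destruct y; reflexivity end.
  - intros; reflexivity.
Defined.


Lemma no_adj (b0 : B) : b0 <> szero -> ~ SHasRightAdjoint h.
Proof.
  intros hb H.
  destruct (H Qx QxS) as [R [eps [RS U]]].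
  destruct (U P1 P1S k1) as [g1 [Hg1 _]].
  destruct (U P2 P2S k2) as [g2 [Hg2 _]].
  set (x1a := ((1%nat, szero) : A1 B)).
  set (ya := (((szero, 1%nat), szero) : A2 B)).
  set (za := (((b0, 0%nat), szero) : A2 B)).
  assert (E1 : smul (g1 x1a) (ps R b0) = szero).
  { rewrite <- (pg_s g1). rewrite <- fn_mul.
    transitivity (pg g1 szero); [f_equal; simpl; now rewrite smul0l|].
    exact (fn_zero (pg g1)). }
  assert (E2 : smul (ps R b0) (g2 ya) = g2 za).
  { rewrite <- (pg_s g2). rewrite <- fn_mul. f_equal.
    simpl. unfold za. rewrite smul0r, sadd0l. simpl. now rewrite sadd0. }
  assert (E3 : smul (g1 x1a) (g2 za) = szero).
  { rewrite <- E2, smulA, E1. apply smul0l. }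
  set (x1 := (exist _ (x1a, tt) eq_refl : pbSRng h P1)).
  set (z := (exist _ (za, tt) eq_refl : pbSRng h P2)).
  assert (E4 : smul (pullback_map h g1 x1) (pullback_map h g2 z) = szero).
  { apply pb_eq. simpl. f_equal. exact E3. }
  assert (E5 := f_equal (pg eps) E4).
  rewrite fn_mul, fn_zero, Hg1, Hg2 in E5.
  simpl in E5. injection E5. rewrite sadd0. auto.
Qed.

End Main.

Definition natS : SRng.
Proof.
  refine {| car := nat; sadd := Nat.add; szero := 0%nat; smul := Nat.mul |};
    intros; lia.
Defined.

Theorem mainTheorem7 :
  (forall B : SRng, is_ring B -> nontrivial B ->
     ~ SHasRightAdjoint (initial_hom B)) /\
  ~ S_LACC.
Proof.
  split.
  - intros B _ [b hb]. exact (@no_adj B b hb).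
  - intros H. apply (@no_adj natS 1%nat). { simpl; lia. } apply H.
Qed.
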